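(* Let $k\ge 2$ and let $T\in\mathbb{R}^{n_1\times\cdots\times n_k}$ admit a decomposition \[ T=\sum_{i=1}^r x_i^{(1)}\otimes\cdots\otimes x_i^{(k)},\qquad x_i^{(j)}\in\mathbb{R}^{n_j}\setminus\{0\}. \] Suppose there is a parameter $\mu$ with $r\mu\le \tfrac12\min_j n_j$ such that for every $j\in[k]$, \[ \sup_{i\in[r]}\frac{\|x_i^{(j)}\|_\infty^2}{\|x_i^{(j)}\|_2^2}\le\frac{\mu}{n_j},\qquad \sup_{i\ne i'\in[r]}\frac{|\langle x_i^{(j)},x_{i'}^{(j)}\rangle|}{\|x_i^{(j)}\|_2\,\|x_{i'}^{(j)}\|_2}\le\frac{\mu}{n_j}. \] Then $T$ is $(\mu_1,\mu_2)$-incoherent (in the tensor sense defined in the context) with $\mu_1\le 2\mu$ and $\mu_2\le 2\mu^{k-1}$.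
   Context: For $T\in\mathbb{R}^{n_1\times\cdots\times n_k}$ and $j\in[k]$, the mode-$j$ unfolding $\operatorname{unfold}_j(T)\in\mathbb{R}^{n_j\times m_j}$, $m_j=\prod_{\ell\ne j}n_\ell$, is defined by $[\operatorname{unfold}_j(T)]_{i_j,(i_1,\dots,i_{j-1},i_{j+1},\dots,i_k)}=T_{i_1,\dots,i_k}$. For a matrix $U$, $\|U\|_{2,\infty}=\max_i\|U_{i,\cdot}\|_2$ (maximum row Euclidean norm). The tensor $T$ is called $(\mu_1,\mu_2)$-incoherent if for every $j\in[k]$, writing the (compact) SVD $\operatorname{unfold}_j(T)=U^{(j)}\Sigma^{(j)}(V^{(j)})^\top$ with $U^{(j)}\in\mathbb{R}^{n_j\times r_j}$, $V^{(j)}\in\mathbb{R}^{m_j\times r_j}$, $r_j=\operatorname{rank}(\operatorname{unfold}_j(T))$, one has $\|U^{(j)}\|_{2,\infty}^2\le \mu_1 r_j/n_j$ and $\|V^{(j)}\|_{2,\infty}^2\le \mu_2 r_j/m_j$. *)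

(* Defs.v *)
From HB Require Import structures.
From mathcomp Require Import all_boot all_order all_algebra.
From mathcomp Require Import reals.
Set Implicit Arguments. Unset Strict Implicit. Unset Printing Implicit Defensive.
Import Order.TTheory GRing.Theory Num.Theory.
Local Open Scope ring_scope.

Section Tensors.
Variable R : realType.
Variables (k : nat) (n : 'I_k -> nat).

Definition midx := forall l : 'I_k, 'I_(n l).

Definition tensor := midx -> R.

(* Column indices of the mode-j unfolding: all indices except the j-th,
   encoded as a multi-index whose j-th coordinate ranges over 'I_1. *)
Definition colidx (j : 'I_k) :=
  {dffun forall l : 'I_k, 'I_(if l == j then 1%N else n l)}.

Lemma colidx_dim (j l : 'I_k) : j != l -> (if l == j then 1%N else n l) = n l.
Proof. by rewrite eq_sym => /negbTE ->. Qed.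

Definition ins_idx (j : 'I_k) (a : 'I_(n j)) (c : colidx j) : midx :=
  fun l => match eqVneq j l with
           | EqNotNeq e => ecast l 'I_(n l) e a
           | NeqNotEq ne => cast_ord (colidx_dim ne) (c l)
           end.

Definition mdim (j : 'I_k) : nat := (\prod_(l < k | l != j) n l)%N.

Lemma card_colidx (j : 'I_k) : #|{: colidx j}| = mdim j.
Proof.
rewrite card_dep_ffun /mdim foldrE big_map big_enum /=.
rewrite (bigD1 j) //= eqxx card_ord mul1n.
by apply: eq_bigr => l /negbTE ->; rewrite card_ord.
Qed.

(* The mode-j unfolding; columns are enumerated in the canonical (enum)
   order of the remaining multi-indices. *)
Definition unfold (T : tensor) (j : 'I_k) : 'M[R]_(n j, mdim j) :=
  \matrix_(a, b) T (ins_idx a (enum_val (cast_ord (esym (card_colidx j)) b))).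

End Tensors.

Definition sqnorm2inf (R : realType) (p q : nat) (U : 'M[R]_(p, q)) : R :=
  \big[Num.max/0]_(i < p) \sum_(b < q) U i b ^+ 2.

(* A = U diag(s) V^T is a compact SVD: U, V with orthonormal columns,
   positive singular values s (r = number of columns = rank A). *)
Definition compact_svd (R : realType) (p q r : nat) (A : 'M[R]_(p, q))
  (U : 'M[R]_(p, r)) (s : 'rV[R]_r) (V : 'M[R]_(q, r)) : Prop :=
  [/\ U^T *m U = 1%:M, V^T *m V = 1%:M, (forall i, 0 < s 0 i)
    & A = U *m diag_mx s *m V^T].

Definition incoherent (R : realType) (k : nat) (n : 'I_k -> nat)
  (T : tensor R n) (mu1 mu2 : R) : Prop :=
  forall (j : 'I_k) (U : 'M[R]_(n j, \rank (unfold T j)))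
    (s : 'rV[R]_(\rank (unfold T j))) (V : 'M[R]_(mdim n j, \rank (unfold T j))),
    compact_svd (unfold T j) U s V ->
    sqnorm2inf U <= mu1 * (\rank (unfold T j))%:R / (n j)%:R /\
    sqnorm2inf V <= mu2 * (\rank (unfold T j))%:R / (mdim n j)%:R.

Definition sqnorm2 (R : realType) (p : nat) (x : 'I_p -> R) : R :=
  \sum_(a < p) x a ^+ 2.
Definition norm2 (R : realType) (p : nat) (x : 'I_p -> R) : R :=
  Num.sqrt (sqnorm2 x).
Definition sqnorminf (R : realType) (p : nat) (x : 'I_p -> R) : R :=
  \big[Num.max/0]_(a < p) x a ^+ 2.
Definition dotv (R : realType) (p : nat) (x y : 'I_p -> R) : R :=
  \sum_(a < p) x a * y a.

(* Main.v *)
Require Import Defs.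
From HB Require Import structures.
From mathcomp Require Import all_boot all_order all_algebra.
From mathcomp Require Import reals ring lra.
Import Order.TTheory GRing.Theory Num.Theory.
Local Open Scope ring_scope.
Set Implicit Arguments. Unset Strict Implicit.
Definition colsq (R : realType) p r (X : 'M[R]_(p, r)) (i : 'I_r) :=
  \sum_(a < p) X a i ^+ 2.
Definition coldot (R : realType) p r (X : 'M[R]_(p, r)) (i i' : 'I_r) :=
  \sum_(a < p) X a i * X a i'.

Lemma abs_bound (R : realType) (z E : R) : 0 <= E -> z ^+ 2 <= E ^+ 2 -> - E <= z.
Proof. move=> h1 h2; nra. Qed.

Lemma gram_lb (R : realType) p r (X : 'M[R]_(p, r)) (eps : R) (c : 'I_r -> R) :
  0 <= eps -> r%:R * eps <= 1/2 ->
  (forall i i', i != i' -> coldot X i i' ^+ 2 <= eps ^+ 2 * colsq X i * colsq X i') ->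
  1/2 * \sum_i c i ^+ 2 * colsq X i <= \sum_a (\sum_i X a i * c i) ^+ 2.
Proof.
move=> e0 er hd.
set w := fun i => c i ^+ 2 * colsq X i.
have w0 i : 0 <= w i by rewrite /w mulr_ge0 ?sqr_ge0 ?sumr_ge0 // => a _; rewrite sqr_ge0.
have -> : \sum_a (\sum_i X a i * c i) ^+ 2 = \sum_i \sum_i' c i * c i' * coldot X i i'.
  transitivity (\sum_a \sum_i \sum_i' (X a i * c i) * (X a i' * c i')).
    apply: eq_bigr => a _; rewrite expr2 big_distrl; apply: eq_bigr => i _.
    by rewrite big_distrr.
  rewrite exchange_big; apply: eq_bigr => i _; rewrite exchange_big.
  apply: eq_bigr => i' _; rewrite /coldot big_distrr; apply: eq_bigr => a _ /=.
  ring.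
have tb i i' : (if i' == i then w i else 0) - eps / 2 * w i - eps / 2 * w i'
    <= c i * c i' * coldot X i i'.
  have [->|ne] := eqVneq i' i.
    have -> : coldot X i i = colsq X i by apply: eq_bigr => a _; rewrite expr2.
    have := w0 i; rewrite /w; nra.
  have := hd i i'; rewrite eq_sym ne => /(_ isT).
  move=> h.
  have : - (eps / 2 * w i + eps / 2 * w i') <= c i * c i' * coldot X i i'.
    apply: abs_bound.
      have := w0 i; have := w0 i'; nra.
    have ww : 4 * (w i * w i') <= (w i + w i') ^+ 2 by have := sqr_ge0 (w i - w i'); lra.
    have : (c i * c i' * coldot X i i') ^+ 2 <= eps ^+ 2 * (w i * w i').
      rewrite /w !exprMn.
      have hc : 0 <= c i ^+ 2 * c i' ^+ 2 by rewrite mulr_ge0 ?sqr_ge0.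
      have := ler_wpM2l hc h. nra.
    move=> h2; apply: (le_trans h2).
    have h3 : 0 <= eps ^+ 2 by rewrite sqr_ge0.
    have := ler_wpM2l h3 ww; nra.
  lra.
apply: le_trans (ler_sum _ (fun i _ => ler_sum _ (fun i' _ => tb i i'))).
set S := \sum_i w i.
have S0 : 0 <= S by apply: sumr_ge0 => i _.
have E i : \sum_i' ((if i' == i then w i else 0) - eps / 2 * w i - eps / 2 * w i')
   = w i - eps / 2 * w i * r%:R - eps / 2 * S.
  rewrite sumrB sumrB sumr_const card_ord -big_mkcond big_pred1_eq -mulr_sumr.
  by rewrite mulr_natr.
rewrite (eq_bigr _ (fun i _ => E i)).
rewrite sumrB sumrB -mulr_suml -mulr_sumr -/S sumr_const card_ord -/S.
rewrite -mulr_natr.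
move: S0 er; nra.
Qed.

Lemma term_bound (R : realType) (x c q : R) : 0 < q ->
  2 * (x * c) <= 2 * (x ^+ 2 / q) + c ^+ 2 * q / 2.
Proof.
move=> q0; set u := x / q.
have xe : x = u * q by rewrite /u divfK // gt_eqF.
rewrite xe; have -> : (u * q) ^+ 2 / q = u ^+ 2 * q by field; rewrite gt_eqF.
have := sqr_ge0 (2 * u - c); nra.
Qed.

Lemma row_bound (R : realType) p r rho (X : 'M[R]_(p, r)) (U : 'M[R]_(p, rho))
  (C : 'M[R]_(r, rho)) :
  U^T *m U = 1%:M -> U = X *m C -> (forall i, 0 < colsq X i) ->
  (forall c : 'I_r -> R,
     1/2 * \sum_i c i ^+ 2 * colsq X i <= \sum_a (\sum_i X a i * c i) ^+ 2) ->
  forall a, \sum_b U a b ^+ 2 <= 2 * \sum_i X a i ^+ 2 / colsq X i.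
Proof.
move=> HUU HU q0 G a.
set s := \sum_b U a b ^+ 2.
pose cc i := \sum_b C i b * U a b.
have Ua a' : \sum_i X a' i * cc i = \sum_b U a' b * U a b.
  transitivity (\sum_b (\sum_i X a' i * C i b) * U a b); last first.
    by apply: eq_bigr => b _; congr (_ * _); rewrite {1}HU mxE.
  under [RHS]eq_bigr => b _ do rewrite big_distrl /=.
  rewrite exchange_big; apply: eq_bigr => i _; rewrite /cc big_distrr.
  by apply: eq_bigr => b _ /=; rewrite mulrA.
have hs1 : \sum_i X a i * cc i = s.
  by rewrite Ua; apply: eq_bigr => b _; rewrite expr2.
have hs2 : \sum_a' (\sum_i X a' i * cc i) ^+ 2 = s.
  under eq_bigr => a' _ do rewrite Ua expr2 big_distrl /=.
  under eq_bigr => a' _ do under eq_bigr => b _ do rewrite big_distrr /=.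
  rewrite exchange_big; apply: eq_bigr => b _; rewrite exchange_big /=.
  have E b' : \sum_a' U a' b * U a b * (U a' b' * U a b') =
      U a b * U a b' * (b == b')%:R.
    have := congr1 (fun M : 'M[R]_rho => M b b') HUU. rewrite !mxE => <-.
    rewrite big_distrr /=; apply: eq_bigr => a' _; rewrite !mxE; ring.
  rewrite (eq_bigr _ (fun b' _ => E b')).
  rewrite (bigD1 b) //= eqxx big1 ?addr0 ?mulr1 ?expr2 // => b' nb.
  by rewrite eq_sym (negbTE nb) mulr0.
have hg := G cc; rewrite hs2 in hg.
have tb i : 2 * (X a i * cc i) <= 2 * (X a i ^+ 2 / colsq X i) + cc i ^+ 2 * colsq X i / 2.
  exact: term_bound.
have := @ler_sum _ _ (index_enum 'I_r) xpredT _ _ (fun i _ => tb i).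
rewrite -mulr_sumr hs1 big_split /= -mulr_sumr -mulr_suml.
move: hg; set A := \sum_i _; set B := \sum_i _; lra.
Qed.

Definition gramP (R : realType) p r (X : 'M[R]_(p, r)) :=
  forall c : 'I_r -> R,
     1/2 * \sum_i c i ^+ 2 * colsq X i <= \sum_a (\sum_i X a i * c i) ^+ 2.

Lemma svd_U (R : realType) p q rho (A : 'M[R]_(p, q)) (U : 'M[R]_(p, rho)) (s : 'rV[R]_rho) (V : 'M[R]_(q, rho)) :
  compact_svd A U s V -> U = A *m V *m diag_mx (\row_i (s 0 i)^-1).
Proof.
case=> _ HV hs ->.
rewrite -[_ *m V^T *m V]mulmxA HV mulmx1 !mul_mx_diag; apply/matrixP => i j.
by rewrite !mxE mulrK // unitfE gt_eqF.
Qed.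

Lemma svd_tr (R : realType) p q rho (A : 'M[R]_(p, q)) (U : 'M[R]_(p, rho))
  (s : 'rV[R]_rho) (V : 'M[R]_(q, rho)) :
  compact_svd A U s V -> compact_svd A^T V s U.
Proof.
case=> HU HV hs ->; split => //.
by rewrite !trmx_mul trmxK tr_diag_mx mulmxA.
Qed.

Lemma svd_rowbound (R : realType) p q r rho (X : 'M[R]_(p, r)) (Y : 'M[R]_(q, r))
  (U : 'M[R]_(p, rho)) (s : 'rV[R]_rho) (V : 'M[R]_(q, rho)) :
  compact_svd (X *m Y^T) U s V -> (forall i, 0 < colsq X i) -> gramP X ->
  forall a, \sum_b U a b ^+ 2 <= 2 * \sum_i X a i ^+ 2 / colsq X i.
Proof.
move=> hsvd q0 G; apply: (row_bound (C := Y^T *m V *m diag_mx (\row_i (s 0 i)^-1))) => //.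
  by case: hsvd.
by rewrite (svd_U hsvd) !mulmxA.
Qed.

Lemma rowfree_gram (R : realType) p r (X : 'M[R]_(p, r)) :
  (forall i, 0 < colsq X i) -> gramP X -> row_free X^T.
Proof.
move=> q0 G; rewrite -kermx_eq0; apply/eqP/matrixP => i l.
have K := mulmx_ker X^T.
have hz : \sum_a (\sum_l0 X a l0 * kermx X^T i l0) ^+ 2 = 0.
  apply: big1 => a _.
  have := congr1 (fun M : 'M[R]_(r, p) => M i a) K; rewrite !mxE => E.
  have -> : \sum_l0 X a l0 * kermx X^T i l0 = 0.
    by rewrite -[RHS]E; apply: eq_bigr => j _; rewrite [X^T _ _]mxE mulrC.
  ring.
have := G (fun l0 => kermx X^T i l0); rewrite hz => h.
have nn l0 : 0 <= kermx X^T i l0 ^+ 2 * colsq X l0 by rewrite mulr_ge0 ?sqr_ge0 ?ltW.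
have hs : \sum_l0 kermx X^T i l0 ^+ 2 * colsq X l0 == 0.
  rewrite eq_le; apply/andP; split; first lra.
  by apply: sumr_ge0 => l0 _.
have : kermx X^T i l ^+ 2 * colsq X l = 0 := psumr_eq0P (fun l0 _ => nn l0) (eqP hs) isT.
move/eqP.
by rewrite mulf_eq0 (gt_eqF (q0 l)) orbF sqrf_eq0 => /eqP ->; rewrite mxE.
Qed.

Lemma rank_XY (R : realType) p q r (X : 'M[R]_(p, r)) (Y : 'M[R]_(q, r)) :
  (forall i, 0 < colsq X i) -> gramP X ->
  (forall i, 0 < colsq Y i) -> gramP Y -> \rank (X *m Y^T) = r.
Proof.
move=> pX gX pY gY.
rewrite mxrankMfree ?rowfree_gram // -mxrank_tr; exact/eqP/rowfree_gram.
Qed.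

Lemma bigmax_le_div (R : realType) p (f : 'I_p -> R) (c : R) :
  (forall a, 0 <= f a <= c / p%:R) -> \big[Num.max/0]_a f a <= c / p%:R.
Proof.
case: p f => [|p] f hf; first by rewrite big_ord0 invr0 mulr0.
have /andP[h1 h2] := hf ord0.
apply: bigmax_le => [|a _]; first exact: le_trans h2.
by case/andP: (hf a).
Qed.

Lemma rows_bound (R : realType) p q r (X : 'M[R]_(p, r)) (Y : 'M[R]_(q, r)) (m : R) rho
  (U : 'M[R]_(p, rho)) (s : 'rV[R]_rho) (V : 'M[R]_(q, rho)) :
  compact_svd (X *m Y^T) U s V -> (forall i, 0 < colsq X i) -> gramP X ->
  (forall a i, X a i ^+ 2 / colsq X i <= m / p%:R) ->
  sqnorm2inf U <= 2 * m * r%:R / p%:R.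
Proof.
move=> hsvd pX gX hb; rewrite /sqnorm2inf.
apply: bigmax_le_div => a; apply/andP; split.
  by apply: sumr_ge0 => b _; rewrite sqr_ge0.
apply: le_trans (svd_rowbound hsvd pX gX a) _.
have : \sum_i X a i ^+ 2 / colsq X i <= \sum_(i < r) (m / p%:R) by apply: ler_sum => i _.
rewrite sumr_const card_ord -mulr_natr => h.
have : 2 * \sum_i X a i ^+ 2 / colsq X i <= 2 * (m / p%:R * r%:R) by lra.
move=> h'; apply: le_trans h' _; rewrite le_eqVlt; apply/orP; left; apply/eqP.
by rewrite mul1r !mulrA mulrAC.
Qed.
Lemma sum_dffun (R : comRingType) (I : finType) (d : I -> nat)
  (F : forall i, 'I_(d i) -> R) :
  \sum_(f : {dffun forall i, 'I_(d i)}) \prod_i F i (f i) =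
  \prod_i \sum_(t : 'I_(d i)) F i t.
Proof.
rewrite (reindex (@dffun_of_fprod I (fun i => 'I_(d i)))) /=; last first.
  exact/onW_bij/dffun_of_fprod_bij.
pose P_ := fun i => [ffun u : 'I_(d i) => F i u].
transitivity (\sum_(t : fprod (fun i => 'I_(d i))) \prod_(i in I) P_ i (t i)).
  by apply: eq_bigr => t _; apply: eq_bigr => i _; rewrite !ffunE.
rewrite (big_fprod 1 +%R P_).
transitivity (\prod_i \sum_(t in tagged_with (fun i => 'I_(d i)) i) untag 0 (P_ i) t).
  rewrite bigA_distr_big_dep; by [].
apply: eq_bigr => i _; rewrite -(big_tag P_); apply: eq_bigr => t _; by rewrite ffunE.
Qed.
Lemma ins_idx_ne k (n : 'I_k -> nat) (j : 'I_k) (a : 'I_(n j)) (c : colidx n j) (l : 'I_k) :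
  j != l -> val (ins_idx a c l) = val (c l).
Proof.
move=> ne; rewrite /ins_idx.
by destruct (eqVneq j l) as [e|ne'].
Qed.

Lemma ins_idx_eq k (n : 'I_k -> nat) (j : 'I_k) (a : 'I_(n j)) (c : colidx n j) :
  ins_idx a c j = a.
Proof.
rewrite /ins_idx.
destruct (eqVneq j j) as [e|ne'].
  by rewrite (eq_axiomK e).
exfalso; have := ne'; by rewrite eqxx.
Qed.

Definition gn (R : realType) k (n : 'I_k -> nat) (G : forall l, 'I_(n l) -> R)
  (l : 'I_k) (m : nat) : R :=
  if (insub m : option 'I_(n l)) is Some a then G l a else 0.

Lemma gnE (R : realType) k (n : 'I_k -> nat) (G : forall l, 'I_(n l) -> R) l (a : 'I_(n l)) :
  gn G l (val a) = G l a.
Proof. by rewrite /gn valK. Qed.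

Definition hh (R : realType) k (n : 'I_k -> nat) (j : 'I_k) (G : forall l, 'I_(n l) -> R)
  (l : 'I_k) (m : nat) : R := if l == j then 1 else gn G l m.

Definition yv (R : realType) k (n : 'I_k -> nat) (j : 'I_k) (G : forall l, 'I_(n l) -> R)
  (c : colidx n j) : R := \prod_l hh j G l (val (c l)).

Lemma hh_j (R : realType) k (n : 'I_k -> nat) (j : 'I_k) (G : forall l, 'I_(n l) -> R) m :
  hh j G j m = 1.
Proof. by rewrite /hh eqxx. Qed.

Lemma hh_ne (R : realType) k (n : 'I_k -> nat) (j : 'I_k) (G : forall l, 'I_(n l) -> R) l m :
  l != j -> hh j G l m = gn G l m.
Proof. by rewrite /hh => /negbTE ->. Qed.

Lemma prod_ins (R : realType) k (n : 'I_k -> nat) (j : 'I_k) (G : forall l, 'I_(n l) -> R)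
  (a : 'I_(n j)) (c : colidx n j) :
  \prod_l G l (ins_idx a c l) = G j a * yv G c.
Proof.
rewrite (bigD1 j) // /yv [X in _ = _ * X](bigD1 j) //= hh_j mul1r ins_idx_eq; congr (_ * _).
apply: eq_bigr => l nl; rewrite hh_ne //.
have -> : val (c l) = val (ins_idx a c l) by rewrite ins_idx_ne // eq_sym.
by rewrite gnE.
Qed.

Lemma sum_hh (R : realType) k (n : 'I_k -> nat) (j : 'I_k) (G : forall l, 'I_(n l) -> R) l :
  \sum_(t : 'I_(if l == j then 1%N else n l)) hh j G l (val t) =
  if l == j then 1 else \sum_a G l a.
Proof.
rewrite /hh; case: (l == j).
  by rewrite big_ord1.
by apply: eq_bigr => a _; rewrite gnE.
Qed.

Lemma hhM (R : realType) k (n : 'I_k -> nat) (j : 'I_k) (G G' : forall l, 'I_(n l) -> R) l m :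
  hh j G l m * hh j G' l m = hh j (fun l a => G l a * G' l a) l m.
Proof.
rewrite /hh; case: (l == j); first by rewrite mulr1.
by rewrite /gn; case: insub => [a|]; rewrite ?mulr0.
Qed.

Lemma sum_yv (R : realType) k (n : 'I_k -> nat) (j : 'I_k) (G : forall l, 'I_(n l) -> R) :
  \sum_(c : colidx n j) yv G c = \prod_(l | l != j) \sum_a G l a.
Proof.
rewrite /yv /colidx.
rewrite (sum_dffun (d := fun l => if l == j then 1%N else n l) (fun l t => hh j G l (val t))).
rewrite [RHS]big_mkcond /=; apply: eq_bigr => l _.
by rewrite sum_hh; case: (l == j).
Qed.

Lemma yvM (R : realType) k (n : 'I_k -> nat) (j : 'I_k) (G G' : forall l, 'I_(n l) -> R) (c : colidx n j) :
  yv G c * yv G' c = yv (fun l a => G l a * G' l a) c.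
Proof. by rewrite /yv -big_split /=; apply: eq_bigr => l _; rewrite hhM. Qed.

Lemma sum_cast (R : realType) m m' (e : m = m') (F : 'I_m' -> R) :
  \sum_(t < m) F (cast_ord e t) = \sum_(a < m') F a.
Proof. by case: m' / e F => F; apply: eq_bigr => t _; rewrite cast_ord_id. Qed.

Lemma sum_colidx (R : realType) k (n : 'I_k -> nat) (j : 'I_k) (F : colidx n j -> R) :
  \sum_(b < mdim n j) F (enum_val (cast_ord (esym (card_colidx n j)) b)) =
  \sum_(c : colidx n j) F c.
Proof.
rewrite (sum_cast _ (fun i => F (enum_val i))).
by rewrite -big_enum_val.
Qed.

Definition Xm (R : realType) k (n : 'I_k -> nat) r (x : 'I_r -> forall j, 'I_(n j) -> R)
  (j : 'I_k) : 'M[R]_(n j, r) := \matrix_(a, i) x i j a.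
Definition Ym (R : realType) k (n : 'I_k -> nat) r (x : 'I_r -> forall j, 'I_(n j) -> R)
  (j : 'I_k) : 'M[R]_(mdim n j, r) :=
  \matrix_(b, i) yv (x i) (enum_val (cast_ord (esym (card_colidx n j)) b)).

Lemma unfold_XY (R : realType) k (n : 'I_k -> nat) r (T : tensor R n)
  (x : 'I_r -> forall j, 'I_(n j) -> R) j :
  (forall idx : midx n, T idx = \sum_(i < r) \prod_(j < k) x i j (idx j)) ->
  unfold T j = Xm x j *m (Ym x j)^T.
Proof.
move=> hT; apply/matrixP => a b; rewrite !mxE hT; apply: eq_bigr => i _.
by rewrite prod_ins !mxE.
Qed.

Lemma coldot_X (R : realType) k (n : 'I_k -> nat) r (x : 'I_r -> forall j, 'I_(n j) -> R) j i i' :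
  coldot (Xm x j) i i' = dotv (x i j) (x i' j).
Proof. by apply: eq_bigr => a _; rewrite !mxE. Qed.

Lemma colsq_X (R : realType) k (n : 'I_k -> nat) r (x : 'I_r -> forall j, 'I_(n j) -> R) j i :
  colsq (Xm x j) i = sqnorm2 (x i j).
Proof. by apply: eq_bigr => a _; rewrite !mxE. Qed.

Lemma coldot_Y (R : realType) k (n : 'I_k -> nat) r (x : 'I_r -> forall j, 'I_(n j) -> R) j i i' :
  coldot (Ym x j) i i' = \prod_(l | l != j) dotv (x i l) (x i' l).
Proof.
transitivity (\sum_(b < mdim n j) (fun c => yv (x i) c * yv (x i') c)
   (enum_val (cast_ord (esym (card_colidx n j)) b))).
  by apply: eq_bigr => b _; rewrite !mxE.
rewrite (sum_colidx (fun c => yv (x i) c * yv (x i') c)).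
rewrite [LHS](eq_bigr _ (fun c _ => yvM (x i) (x i') c)).
by rewrite sum_yv.
Qed.

Lemma colsq_Y (R : realType) k (n : 'I_k -> nat) r (x : 'I_r -> forall j, 'I_(n j) -> R) j i :
  colsq (Ym x j) i = \prod_(l | l != j) sqnorm2 (x i l).
Proof.
have -> : colsq (Ym x j) i = coldot (Ym x j) i i by apply: eq_bigr => b _; rewrite expr2.
by rewrite coldot_Y; apply: eq_bigr => l _; apply: eq_bigr => a _; rewrite expr2.
Qed.

Lemma Y_sq (R : realType) k (n : 'I_k -> nat) r (x : 'I_r -> forall j, 'I_(n j) -> R) j b i :
  Ym x j b i ^+ 2 = yv (fun l a => x i l a ^+ 2) (enum_val (cast_ord (esym (card_colidx n j)) b)).
Proof. rewrite /Ym mxE expr2 yvM; congr yv; by do 2 apply: functional_extensionality_dep => ?; rewrite expr2. Qed.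

Unset Implicit Arguments.

Lemma svd_bounds (R : realType) p q r (A : 'M[R]_(p, q)) (X : 'M[R]_(p, r)) (Y : 'M[R]_(q, r))
  (m1 m2 : R) rho (U : 'M[R]_(p, rho)) (s : 'rV[R]_rho) (V : 'M[R]_(q, rho)) :
  compact_svd A U s V -> A = X *m Y^T ->
  (forall i, 0 < colsq X i) -> gramP X -> (forall i, 0 < colsq Y i) -> gramP Y ->
  (forall a i, X a i ^+ 2 / colsq X i <= m1 / p%:R) ->
  (forall b i, Y b i ^+ 2 / colsq Y i <= m2 / q%:R) ->
  sqnorm2inf U <= 2 * m1 * r%:R / p%:R /\ sqnorm2inf V <= 2 * m2 * r%:R / q%:R.
Proof.
move=> h e pX gX pY gY bX bY; rewrite e in h; split.
  exact: rows_bound h pX gX bX.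
have h' := svd_tr h; rewrite trmx_mul trmxK in h'.
exact: rows_bound h' pY gY bY.
Qed.

Lemma sqnorm2_gt0 (R : realType) p (v : 'I_p -> R) : (exists a, v a != 0) -> 0 < sqnorm2 v.
Proof.
case=> a na; rewrite /sqnorm2 (bigD1 a) //=.
apply: (lt_le_trans (y := v a ^+ 2)); first by rewrite lt_def sqrf_eq0 na sqr_ge0.
rewrite lerDl; apply: sumr_ge0 => b _; exact: sqr_ge0.
Qed.

Lemma entry_le_inf (R : realType) p (v : 'I_p -> R) a : v a ^+ 2 <= sqnorminf v.
Proof. exact: (le_bigmax 0 (fun a => v a ^+ 2) a). Qed.

Theorem lemma2p3 (R : realType) (k : nat) (n : 'I_k -> nat) (r : nat)
    (T : tensor R n)
    (x : 'I_r -> forall j : 'I_k, 'I_(n j) -> R)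
    (mu : R) :
  (2 <= k)%N ->
  (forall (i : 'I_r) (j : 'I_k), exists a : 'I_(n j), x i j a != 0) ->
  (forall idx : midx n, T idx = \sum_(i < r) \prod_(j < k) x i j (idx j)) ->
  (forall j : 'I_k, r%:R * mu <= (n j)%:R / 2) ->
  (forall (j : 'I_k) (i : 'I_r),
      sqnorminf (x i j) / sqnorm2 (x i j) <= mu / (n j)%:R) ->
  (forall (j : 'I_k) (i i' : 'I_r), i != i' ->
      `|dotv (x i j) (x i' j)| / (norm2 (x i j) * norm2 (x i' j))
        <= mu / (n j)%:R) ->
  exists mu1 mu2 : R,
    [/\ incoherent T mu1 mu2, mu1 <= 2 * mu & mu2 <= 2 * mu ^+ k.-1].
Proof.
move=> hk hnz hT hr hinf hdot.
exists (2 * mu), (2 * mu ^+ k.-1); split => //.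
have q0 i l : 0 < sqnorm2 (x i l) by apply: sqnorm2_gt0; exact: hnz.
pose eps := fun l : 'I_k => Num.max 0 (mu / (n l)%:R).
have eps0 l : 0 <= eps l by rewrite /eps le_max lexx.
have epsr l : r%:R * eps l <= 1/2.
  rewrite /eps /=; have [h|h] := leP (mu / (n l)%:R) 0.
    by rewrite mulr0; lra.
  idtac.
  have np : 0 < (n l)%:R :> R.
    rewrite ltr0n lt0n; apply/negP => /eqP e; move: h; rewrite e invr0 mulr0; lra.
  rewrite mulrA ler_pdivrMr //; have := hr l; lra.
have entry l i a : x i l a ^+ 2 <= mu / (n l)%:R * sqnorm2 (x i l).
  rewrite -ler_pdivrMr //; apply: le_trans (hinf l i).
  apply: ler_wpM2r; first by rewrite invr_ge0 ltW.
  exact: entry_le_inf.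
have dotb l i i' : i != i' ->
    dotv (x i l) (x i' l) ^+ 2 <= eps l ^+ 2 * sqnorm2 (x i l) * sqnorm2 (x i' l).
  move=> ne; have h := hdot l i i' ne.
  set d := dotv _ _ in h *.
  have N0 : 0 < norm2 (x i l) * norm2 (x i' l) by rewrite mulr_gt0 // sqrtr_gt0.
  have h1 : `|d| <= eps l * (norm2 (x i l) * norm2 (x i' l)).
    rewrite -ler_pdivrMr //; apply: le_trans h _; rewrite /eps /= le_max lexx orbT //.
  have h2 : `|d| ^+ 2 <= (eps l * (norm2 (x i l) * norm2 (x i' l))) ^+ 2.
    by rewrite !expr2; apply: ler_pM; rewrite ?normr_ge0.
  rewrite real_normK ?num_real // in h2; apply: le_trans h2 _.
  by rewrite !exprMn /norm2 !sqr_sqrtr ?mulrA // ltW.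
move=> j U s V hsvd.
have hA := unfold_XY j hT.
have pX : forall i, 0 < colsq (Xm x j) i by move=> i; rewrite colsq_X.
have gX : gramP (Xm x j).
  move=> c; apply: gram_lb; [exact: eps0 j | exact: epsr j | move=> i i' ne].
  by rewrite coldot_X !colsq_X; exact: dotb.
have pY : forall i, 0 < colsq (Ym x j) i.
  by move=> i; rewrite colsq_Y; apply: prodr_gt0 => l _.
pose epsY := \prod_(l | l != j) eps l.
have epsY0 : 0 <= epsY by apply: prodr_ge0 => l _.
have epsYr : r%:R * epsY <= 1/2.
  have [l0 nl0] : exists l0 : 'I_k, l0 != j.
    have k0 : (0 < k)%N by apply: leq_trans hk.
    case: (eqVneq (Ordinal k0) j) => [e|ne]; last by exists (Ordinal k0).
    by exists (Ordinal hk); rewrite -e.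
  case: (posnP r) => [->|rpos]; first by rewrite mul0r; lra.
  have r1 : 1 <= r%:R :> R by rewrite ler1n.
  have e1 l : 0 <= eps l <= 1 by rewrite eps0 /=; have := epsr l; have := eps0 l; nra.
  rewrite /epsY (bigD1 l0) //=.
  have P1 : \prod_(l | (l != j) && (l != l0)) eps l <= 1 by apply: prodr_ile1 => l _.
  have P0 : 0 <= \prod_(l | (l != j) && (l != l0)) eps l by apply: prodr_ge0 => l _.
  have := epsr l0; have := eps0 l0; nra.
have gY : gramP (Ym x j).
  move=> c; apply: gram_lb; [exact: epsY0 | exact: epsYr | move=> i i' ne].
  rewrite coldot_Y !colsq_Y -prodrXl /epsY -prodrXl -!big_split /=.
  by apply: ler_prod => l nl; rewrite sqr_ge0 dotb.
have bX : forall a i, Xm x j a i ^+ 2 / colsq (Xm x j) i <= mu / (n j)%:R.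
  by move=> a i; rewrite colsq_X mxE ler_pdivrMr.
have bY : forall b i, Ym x j b i ^+ 2 / colsq (Ym x j) i <= mu ^+ k.-1 / (mdim n j)%:R.
  move=> b i; rewrite Y_sq colsq_Y ler_pdivrMr; last by apply: prodr_gt0 => l _.
  set c := enum_val _.
  have -> : mu ^+ k.-1 / (mdim n j)%:R = \prod_(l | l != j) (mu / (n l)%:R).
    rewrite prodf_div /mdim natr_prod; congr (_ / _).
    by rewrite -[RHS]/(\prod_(l in predC1 j) mu) prodr_const cardC1 card_ord.
  rewrite -big_split /= /yv [X in _ <= X]big_mkcond /=; apply: ler_prod => l _.
  have [e|ne] : l = j \/ l != j by case: eqP; auto.
    subst l.
    by rewrite hh_j eqxx /= lexx ler01.
  rewrite hh_ne // ne /= /gn; case: insub => [a|].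
    by rewrite sqr_ge0 entry.
  have [a0 _] := hnz i l.
  by rewrite lexx /=; apply: le_trans (entry l i a0); rewrite sqr_ge0.
have rk : \rank (unfold T j) = r by rewrite hA; apply: rank_XY.
rewrite (_ : (\rank (unfold T j))%:R = r%:R) ?rk //.
exact: svd_bounds hsvd hA pX gX pY gY bX bY.
Qed.
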